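(* Let $f:[-1,1]\to\mathbb{R}$ be convex and symmetric ($f(x)=f(-x)$). Define, for $d_1,d_2\in[-1,1]$, $$f^+(d_1,d_2)=\frac{1+d_1d_2}{2}\,f\!\left(\frac{d_1+d_2}{1+d_1d_2}\right)+\frac{1-d_1d_2}{2}\,f\!\left(\frac{d_1-d_2}{1-d_1d_2}\right).$$ Then $f^+$ is convex and symmetric in each of its variables, i.e. for each fixed $d_2$ the map $d_1\mapsto f^+(d_1,d_2)$ is convex on $[-1,1]$ with $f^+(d_1,d_2)=f^+(-d_1,d_2)$, and likewise in $d_2$ for fixed $d_1$.
   Context: In the definition of $f^+$, a term whose prefactor $1\pm d_1d_2$ equals $0$ is taken to be $0$. *)

(* Defs.v *)
From Stdlib Require Import Reals.
Open Scope R_scope.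

Definition convex_on (a b : R) (f : R -> R) : Prop :=
  forall x y t, a <= x <= b -> a <= y <= b -> 0 <= t <= 1 ->
    f (t * x + (1 - t) * y) <= t * f x + (1 - t) * f y.

Definition symmetric_on1 (f : R -> R) : Prop :=
  forall x, -1 <= x <= 1 -> f x = f (- x).

(* a term c/2 * f(u/c) whose prefactor c is 0 is taken to be 0 *)
Definition fterm (f : R -> R) (c u : R) : R :=
  if Req_EM_T c 0 then 0 else c / 2 * f (u / c).

Definition fplus (f : R -> R) (d1 d2 : R) : R :=
  fterm f (1 + d1 * d2) (d1 + d2) + fterm f (1 - d1 * d2) (d1 - d2).

(* Main.v *)
Require Import Defs.
From Stdlib Require Import Reals Lra Psatz.
Open Scope R_scope.

Lemma div_bound (u c : R) : 0 < c -> -c <= u <= c -> -1 <= u / c <= 1.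
Proof.
  intros Hc Hu. assert (E : u = (u / c) * c) by (field; lra).
  set (v := u / c) in *. clearbody v. subst u. split; nra.
Qed.

Lemma fterm_neg f c u : symmetric_on1 f -> -c <= u <= c ->
  fterm f c (- u) = fterm f c u.
Proof.
  intros Hs Hu. unfold fterm. destruct (Req_EM_T c 0) as [E|E]; [reflexivity|].
  assert (Hc : 0 < c) by lra.
  pose proof (div_bound u c Hc Hu) as B.
  replace (- u / c) with (- (u / c)) by (field; lra).
  rewrite <- (Hs (u / c) B). reflexivity.
Qed.

Lemma persp f c1 u1 c2 u2 t : convex_on (-1) 1 f ->
  -c1 <= u1 <= c1 -> -c2 <= u2 <= c2 -> 0 <= t <= 1 ->
  fterm f (t * c1 + (1 - t) * c2) (t * u1 + (1 - t) * u2)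
  <= t * fterm f c1 u1 + (1 - t) * fterm f c2 u2.
Proof.
  intros Hf H1 H2 Ht. unfold fterm.
  destruct (Req_EM_T (t * c1 + (1 - t) * c2) 0) as [E|E];
  destruct (Req_EM_T c1 0) as [E1|E1];
  destruct (Req_EM_T c2 0) as [E2|E2].
  - lra.
  - assert (1 - t = 0) by nra. replace (1 - t) with 0 by lra. lra.
  - assert (t = 0) by nra. subst t. lra.
  - assert (t = 0) by nra. assert (1 - t = 0) by nra. lra.
  - exfalso. apply E. subst c1 c2. ring.
  - assert (u1 = 0) by lra. subst c1 u1.
    assert (Ht' : 0 < 1 - t) by (destruct (Req_dec t 1); [subst; exfalso; apply E; ring| lra]).
    replace ((1 - t) * u2 / (t * 0 + (1 - t) * c2)) with (u2 / c2) by (field; lra).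
    replace (t * 0 + (1 - t) * u2) with ((1 - t) * u2) by ring.
    replace (t * 0 + (1 - t) * c2) with ((1 - t) * c2) by ring.
    replace ((1 - t) * u2 / ((1 - t) * c2)) with (u2 / c2) by (field; lra).
    lra.
  - assert (u2 = 0) by lra. subst c2 u2.
    assert (Ht' : 0 < t) by (destruct (Req_dec t 0); [subst; exfalso; apply E; ring| lra]).
    replace (t * c1 + (1 - t) * 0) with (t * c1) by ring.
    replace (t * u1 + (1 - t) * 0) with (t * u1) by ring.
    replace (t * u1 / (t * c1)) with (u1 / c1) by (field; lra).
    lra.
  - assert (Hc1 : 0 < c1) by lra. assert (Hc2 : 0 < c2) by lra.
    set (c := t * c1 + (1 - t) * c2) in *.
    assert (Hc : 0 < c) by (unfold c; nra).
    set (s := t * c1 / c).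
    assert (Hs0 : 0 <= s) by (unfold s, Rdiv; apply Rmult_le_pos; [nra| left; apply Rinv_0_lt_compat; lra]).
    assert (Hs1 : s <= 1).
    { unfold s. apply (Rmult_le_reg_r c); [lra|]. unfold Rdiv.
      rewrite Rmult_assoc, Rinv_l by lra. unfold c; nra. }
    assert (Eq : (t * u1 + (1 - t) * u2) / c = s * (u1 / c1) + (1 - s) * (u2 / c2)).
    { unfold s. assert (1 - t * c1 / c = (1 - t) * c2 / c) by (unfold c; field; unfold c in Hc; lra).
      rewrite H. field. unfold c in Hc; lra. }
    rewrite Eq.
    pose proof (Hf (u1 / c1) (u2 / c2) s (div_bound _ _ Hc1 H1) (div_bound _ _ Hc2 H2) (conj Hs0 Hs1)) as K.
    apply Rle_trans with (c / 2 * (s * f (u1 / c1) + (1 - s) * f (u2 / c2))).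
    + apply Rmult_le_compat_l; lra.
    + right. unfold s. assert (1 - t * c1 / c = (1 - t) * c2 / c) by (unfold c; field; unfold c in Hc; lra).
      rewrite H. field. unfold c in Hc; lra.
Qed.

Lemma fplus_swap f d1 d2 : symmetric_on1 f -> -1 <= d1 <= 1 -> -1 <= d2 <= 1 ->
  fplus f d1 d2 = fplus f d2 d1.
Proof.
  intros Hs H1 H2. unfold fplus.
  replace (1 + d1 * d2) with (1 + d2 * d1) by ring.
  replace (d1 + d2) with (d2 + d1) by ring.
  replace (1 - d1 * d2) with (1 - d2 * d1) by ring.
  replace (d1 - d2) with (- (d2 - d1)) by ring.
  rewrite fterm_neg; [reflexivity| exact Hs| split; nra].
Qed.

Lemma fplus_neg f d1 d2 : symmetric_on1 f -> -1 <= d1 <= 1 -> -1 <= d2 <= 1 ->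
  fplus f d1 d2 = fplus f (- d1) d2.
Proof.
  intros Hs H1 H2. unfold fplus.
  replace (1 + - d1 * d2) with (1 - d1 * d2) by ring.
  replace (1 - - d1 * d2) with (1 + d1 * d2) by ring.
  replace (- d1 + d2) with (- (d1 - d2)) by ring.
  replace (- d1 - d2) with (- (d1 + d2)) by ring.
  rewrite (fterm_neg f (1 - d1 * d2)); [| exact Hs| split; nra].
  rewrite (fterm_neg f (1 + d1 * d2)); [| exact Hs| split; nra].
  ring.
Qed.

Lemma fplus_convex f d2 : convex_on (-1) 1 f -> -1 <= d2 <= 1 ->
  convex_on (-1) 1 (fun d1 => fplus f d1 d2).
Proof.
  intros Hf H2 x y t Hx Hy Ht. unfold fplus.
  replace (1 + (t * x + (1 - t) * y) * d2) with (t * (1 + x * d2) + (1 - t) * (1 + y * d2)) by ring.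
  replace (t * x + (1 - t) * y + d2) with (t * (x + d2) + (1 - t) * (y + d2)) by ring.
  replace (1 - (t * x + (1 - t) * y) * d2) with (t * (1 - x * d2) + (1 - t) * (1 - y * d2)) by ring.
  replace (t * x + (1 - t) * y - d2) with (t * (x - d2) + (1 - t) * (y - d2)) by ring.
  pose proof (persp f (1 + x * d2) (x + d2) (1 + y * d2) (y + d2) t Hf
    ltac:(split; nra) ltac:(split; nra) Ht).
  pose proof (persp f (1 - x * d2) (x - d2) (1 - y * d2) (y - d2) t Hf
    ltac:(split; nra) ltac:(split; nra) Ht).
  lra.
Qed.

Theorem lemma1 (f : R -> R) :
  convex_on (-1) 1 f -> symmetric_on1 f ->
  (forall d2, -1 <= d2 <= 1 ->
     convex_on (-1) 1 (fun d1 => fplus f d1 d2) /\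
     (forall d1, -1 <= d1 <= 1 -> fplus f d1 d2 = fplus f (- d1) d2)) /\
  (forall d1, -1 <= d1 <= 1 ->
     convex_on (-1) 1 (fun d2 => fplus f d1 d2) /\
     (forall d2, -1 <= d2 <= 1 -> fplus f d1 d2 = fplus f d1 (- d2))).
Proof.
  intros Hf Hs. split.
  - intros d2 H2. split; [apply fplus_convex; assumption|].
    intros d1 H1. apply fplus_neg; assumption.
  - intros d1 H1. split.
    + intros x y t Hx Hy Ht.
      assert (Hz : -1 <= t * x + (1 - t) * y <= 1) by nra.
      rewrite !(fplus_swap f d1) by assumption.
      apply fplus_convex; assumption.
    + intros d2 H2. rewrite (fplus_swap f d1 d2), (fplus_swap f d1 (- d2)) by (auto; lra).
      apply fplus_neg; assumption.
Qed.
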